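(* A random permutation $\boldsymbol\pi\in\mathcal S_n$ is exchangeable if and only if its distribution is determined by a collection of functions of the form $$p(\pi)=p^{(n)}_k(n_1,\dots,n_k)=\frac{1}{\prod_{j=1}^k(n_j-1)!}\varphi^{(n)}_k(n_1,\dots,n_k)$$ for any $k\in[n]$, where $(\varphi^{(m)})_{m\geq1}$ is an EPPF and $(n_1,\dots,n_k)$ are the cycle lengths of $\pi$.
   Context: $\mathcal S_n$ is the symmetric group on $[n]=\{1,\dots,n\}$. The cycle type of $\pi\in\mathcal S_n$ is $\mathrm{t}(\pi)=(t_1(\pi),\dots,t_n(\pi))$, $t_i(\pi)$ being the number of cycles of length $i$. A random permutation $\boldsymbol\pi\in\mathcal S_n$ is finitely exchangeable if $P(\boldsymbol\pi=\pi)=P(\boldsymbol\pi=\pi')$ whenever $\mathrm{t}(\pi)=\mathrm{t}(\pi')$. The deletion map $\operatorname{del}:\mathcal S_{n+1}\to\mathcal S_n$ removes $n+1$ from the cycle representation: $\operatorname{del}(\sigma)(i)=\sigma(i)$ if $i\neq\sigma^{-1}(n+1)$, and $\operatorname{del}(\sigma)(i)=\sigma(n+1)$ if $i=\sigma^{-1}(n+1)$. A sequence $(\boldsymbol\pi_m)_{m\geq1}$, $\boldsymbol\pi_m\in\mathcal S_m$ with law $\mathcal L_m$, is consistent if $\operatorname{del}(\boldsymbol\pi_{m+1})\sim\mathcal L_m$ for all $m$. A random permutation $\boldsymbol\pi\in\mathcal S_n$ is exchangeable if there is a consistent sequence $(\boldsymbol\pi^\star_m)_{m\geq1}$ of finitely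 exchangeable random permutations with $\boldsymbol\pi^\star_n\overset{d}{=}\boldsymbol\pi$. An EPPF (exchangeable partition probability function) is a collection $(\varphi^{(n)})_{n\ge1}$ of symmetric functions $\varphi^{(n)}_k(n_1,\dots,n_k)$, $\sum_j n_j=n$, giving the probability of a given partition of $[n]$ into $k$ blocks of sizes $n_1,\dots,n_k$ under an exchangeable random partition, and satisfying $\varphi^{(1)}_1(1)=1$ and $\varphi_k^{(n)}(n_1,\dots,n_k)=\sum_{j=1}^k\varphi_k^{(n+1)}(n_1,\dots,n_j+1,\dots,n_k)+\varphi_{k+1}^{(n+1)}(n_1,\dots,n_k,1)$. *)

(* Defs.v *)
From HB Require Import structures.
From mathcomp Require Import all_boot all_order all_algebra all_fingroup.
From mathcomp Require Import reals.
Set Implicit Arguments. Unset Strict Implicit. Unset Printing Implicit Defensive.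
Import Order.TTheory GRing.Theory Num.Theory.
Local Open Scope ring_scope.

(* S_n is modelled as {perm 'I_n} (points 0..n-1 instead of 1..n). *)

Definition cycle_count (n : nat) (s : {perm 'I_n}) (i : nat) : nat :=
  #|[set C in porbits s | #|C| == i]|.

Definition cycle_lengths (n : nat) (s : {perm 'I_n}) : seq nat :=
  [seq #|(C : {set 'I_n})| | C in porbits s].

(* The deletion map del : S_{n+1} -> S_n (the point n+1 is ord_max),
   given as a function 'I_n -> 'I_n. *)
Definition del (n : nat) (s : {perm 'I_n.+1}) (i : 'I_n) : 'I_n :=
  match unlift ord_max (s (widen_ord (leqnSn n) i)) with
  | Some k => k
  | None => match unlift ord_max (s ord_max) with
            | Some k => k
            | None => i  (* unreachable, since s is injective *)
            end
  end.

Definition is_law (R : realType) (n : nat) (P : {ffun {perm 'I_n} -> R}) : Prop :=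
  (forall s, 0 <= P s) /\ \sum_(s : {perm 'I_n}) P s = 1.

Definition finitely_exchangeable (R : realType) (n : nat)
  (P : {ffun {perm 'I_n} -> R}) : Prop :=
  forall s t : {perm 'I_n},
    (forall i, cycle_count s i = cycle_count t i) -> P s = P t.

(* Law of del(pi_{m+1}) equals law of pi_m. *)
Definition consistent (R : realType) (Q : forall m : nat, {ffun {perm 'I_m} -> R}) : Prop :=
  forall (m : nat), (0 < m)%N -> forall pi : {perm 'I_m},
    Q m pi = \sum_(sg : {perm 'I_m.+1} | [forall i, del sg i == pi i]) Q m.+1 sg.

Definition exchangeable (R : realType) (n : nat) (P : {ffun {perm 'I_n} -> R}) : Prop :=
  exists Q : forall m : nat, {ffun {perm 'I_m} -> R},
    [/\ forall m, (0 < m)%N -> is_law (Q m),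
        forall m, (0 < m)%N -> finitely_exchangeable (Q m),
        consistent Q &
        Q n = P].

Definition is_comp (n : nat) (s : seq nat) : bool :=
  all (fun x => 0 < x)%N s && (sumn s == n).

(* EPPF: phi n [:: n_1; ...; n_k] = phi^{(n)}_k(n_1,...,n_k). *)
Definition EPPF (R : realType) (phi : nat -> seq nat -> R) : Prop :=
  [/\ forall n s t, is_comp n s -> perm_eq s t -> phi n s = phi n t,
      forall n s, (0 < n)%N -> is_comp n s -> 0 <= phi n s,
      phi 1%N [:: 1%N] = 1 &
      forall n s, (0 < n)%N -> is_comp n s ->
        phi n s = \sum_(j < size s) phi n.+1 (incr_nth s j)
                  + phi n.+1 (rcons s 1%N)].

(* Main.v *)
Require Import Defs.
From HB Require Import structures.
From mathcomp Require Import all_boot all_order all_algebra all_fingroup.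
From mathcomp Require Import reals.
From mathcomp Require Import zify.
Import Order.TTheory GRing.Theory Num.Theory.
Set Implicit Arguments. Unset Strict Implicit. Unset Printing Implicit Defensive.

Section PorbitGen.
Variable T : finType.
Implicit Types (s : {perm T}) (A : {set T}).

Lemma porbit_sub s A x : (forall y, y \in A -> s y \in A) -> x \in A ->
  porbit s x \subset A.
Proof.
move=> cl xA; apply/subsetP => y /porbitP [i ->]; rewrite permX.
by elim: i => //= i IH; apply: cl.
Qed.


Lemma porbit_stable s x y : y \in porbit s x -> s y \in porbit s x.
Proof.
move=> yx; have <- : porbit s y = porbit s x by apply/eqP; rewrite eq_porbit_mem.
by have := mem_porbit s 1 y; rewrite expg1.
Qed.


Lemma porbit_eq_in s C D i : C \in porbits s -> D \in porbits s -> i \in D ->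
  (i \in C) = (C == D).
Proof.
move=> /imsetP[a _ ->] /imsetP[b _ ->] ib.
have /eqP <- : porbit s i == porbit s b by rewrite eq_porbit_mem.
by rewrite -eq_porbit_mem eq_sym.
Qed.


Lemma partition_porbits s : partition (porbits s) [set: T].
Proof.
apply/and3P; split.
- apply/eqP/setP => x; rewrite inE; apply/bigcupP; exists (porbit s x).
    exact: imset_f.
  exact: porbit_id.
- apply/trivIsetP => A B /imsetP[a _ ->] /imsetP[b _ ->] ne.
  rewrite -setI_eq0; apply/eqP/setP => z; rewrite !inE.
  apply/negbTE; apply: contra ne => /andP[za zb].
  have /eqP <- : porbit s z == porbit s a by rewrite eq_porbit_mem.
  by rewrite eq_porbit_mem.
- apply/imsetP => [[x _ E]]; have := porbit_id s x; by rewrite -E inE.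
Qed.


End PorbitGen.

Lemma cl_comp m (pi : {perm 'I_m}) : is_comp m (cycle_lengths pi).
Proof.
rewrite /is_comp; apply/andP; split.
- apply/allP => x /mapP [C]; rewrite mem_enum => /imsetP [y _ ->] ->.
  by rewrite lt0n card_porbit_neq0.
- rewrite sumnE /cycle_lengths /image_mem big_map big_enum /=.
  by rewrite -(card_partition (partition_porbits pi)) cardsT card_ord.
Qed.


Lemma comp0 s : is_comp 0 s -> s = [::].
Proof. case: s => //= x s /andP [/andP [x0 _] /eqP] /=; lia. Qed.

Lemma comp1 s : is_comp 1 s -> s = [:: 1%N].
Proof.
case: s => //= x s /andP[/andP[x0 pos] /eqP /= E].
case: s pos E => [|y s] /=; first by rewrite addn0 => _ ->.
move=> /andP[y0 _]; lia.
Qed.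


Lemma cycle_count_cl m (s : {perm 'I_m}) i :
  cycle_count s i = count_mem i (cycle_lengths s).
Proof.
rewrite /cycle_count /cycle_lengths /image_mem count_map.
rewrite -sum1_count big_enum_cond /= -sum1_card.
by apply: eq_bigl => C; rewrite !inE.
Qed.


Lemma cl_perm_count m (s t : {perm 'I_m}) :
  perm_eq (cycle_lengths s) (cycle_lengths t) <->
  (forall i, cycle_count s i = cycle_count t i).
Proof.
split=> [pe i | H]; first by rewrite !cycle_count_cl; move/seq.permP: pe => ->.
apply/allP => x _ /=; apply/eqP.
by have := H x; rewrite !cycle_count_cl.
Qed.


Section Insert.
Variable m : nat.
Implicit Types (pi : {perm 'I_m}) (k : 'I_m.+1).

Definition lp pi : {perm 'I_m.+1} := lift_perm ord_max ord_max pi.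
Definition sgk pi k : {perm 'I_m.+1} := tperm k ord_max * lp pi.

Lemma lp_max pi : lp pi ord_max = ord_max. Proof. exact: lift_perm_id. Qed.
Lemma lp_lift pi x : lp pi (lift ord_max x) = lift ord_max (pi x).
Proof. exact: lift_perm_lift. Qed.
Lemma sgk_k pi k : sgk pi k k = ord_max.
Proof. by rewrite permM tpermL lp_max. Qed.
Lemma sgk_max pi k : sgk pi k ord_max = lp pi k.
Proof. by rewrite permM tpermR. Qed.
Lemma sgk_other pi k x : lift ord_max x != k ->
  sgk pi k (lift ord_max x) = lift ord_max (pi x).
Proof. by move=> ne; rewrite permM tpermD ?lp_lift // ?neq_lift // eq_sym. Qed.
Lemma sgk_lp pi : sgk pi ord_max = lp pi.
Proof. by rewrite /sgk tperm1 mul1g. Qed.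

Lemma widen_lift (x : 'I_m) : widen_ord (leqnSn m) x = lift ord_max x.
Proof. by apply/val_inj; rewrite /= /bump leqNgt ltn_ord. Qed.

Lemma del_lift (sg : {perm 'I_m.+1}) x : lift ord_max (del sg x) =
  if sg (lift ord_max x) == ord_max then sg ord_max else sg (lift ord_max x).
Proof.
rewrite /del widen_lift.
case: (unliftP ord_max (sg (lift ord_max x))) => [j E|E].
  by rewrite E eq_sym (negbTE (neq_lift _ _)).
rewrite E eqxx.
case: (unliftP ord_max (sg ord_max)) => [j E2|E2]; first by rewrite E2.
by move: (neq_lift ord_max x); rewrite -(perm_inj (etrans E2 (esym E))) eqxx.
Qed.

Lemma del_sgk pi k x : del (sgk pi k) x = pi x.
Proof.
apply: (@lift_inj _ ord_max); rewrite del_lift.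
case: (eqVneq (lift ord_max x) k) => [<-|ne].
  by rewrite sgk_k eqxx sgk_max lp_lift.
by rewrite sgk_other // eq_sym (negbTE (neq_lift _ _)).
Qed.

Lemma del_fiber pi (sg : {perm 'I_m.+1}) : (forall x, del sg x = pi x) ->
  sg = sgk pi ((sg^-1)%g ord_max).
Proof.
move=> H; apply/permP => y; set k := (sg^-1)%g ord_max.
have sgk0 : sg k = ord_max by rewrite permKV.
case: (unliftP ord_max y) => [x ->|->].
  case: (eqVneq (lift ord_max x) k) => [E|ne].
    by rewrite E sgk0 sgk_k.
  rewrite sgk_other // -H del_lift.
  have -> : (sg (lift ord_max x) == ord_max) = false.
    apply/negbTE; apply: contra ne => /eqP E; apply/eqP; apply: (@perm_inj _ sg); by rewrite E sgk0.
  by [].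
rewrite sgk_max; case: (unliftP ord_max k) => [x E|E].
  by rewrite E lp_lift -H del_lift -E sgk0 eqxx.
by rewrite E lp_max; rewrite E in sgk0.
Qed.

Lemma sgk_inj pi : injective (sgk pi).
Proof. by move=> k k' E; apply: (@perm_inj _ (sgk pi k')); rewrite -{1}E !sgk_k. Qed.

Lemma del_inj (sg : {perm 'I_m.+1}) : injective (del sg).
Proof.
move=> a b E; have := congr1 (lift ord_max) E; rewrite !del_lift.
case: eqP => Ea; case: eqP => Eb.
- by move=> _; apply: (@lift_inj _ ord_max); apply: (@perm_inj _ sg); rewrite Ea Eb.
- move/perm_inj => E2; case: (negP (neq_lift ord_max b)); exact/eqP.
- move/perm_inj => E2; case: (negP (neq_lift ord_max a)); by apply/eqP; rewrite E2.
- by move/perm_inj/lift_inj.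
Qed.

Definition delp (sg : {perm 'I_m.+1}) : {perm 'I_m} := perm (@del_inj sg).

Section Sums.
Variable R : realType.
Local Open Scope ring_scope.

Lemma fiber_sum pi (F : {perm 'I_m.+1} -> R) :
  \sum_(sg | [forall i, del sg i == pi i]) F sg = \sum_k F (sgk pi k).
Proof.
rewrite -(big_imset _ (in2W (@sgk_inj pi))) /=.
apply: eq_bigl => sg; apply/forallP/imsetP => [H|[k _ ->] i].
  by exists ((sg^-1)%g ord_max) => //; apply: del_fiber => x; exact/eqP.
by rewrite del_sgk.
Qed.

Lemma total_sum (F : {perm 'I_m.+1} -> R) :
  \sum_sg F sg = \sum_(pi : {perm 'I_m}) \sum_(sg | [forall i, del sg i == pi i]) F sg.
Proof.
rewrite (exchange_big_dep xpredT) //=; apply: eq_bigr => sg _.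
rewrite (big_pred1 (delp sg)) // => pi /=.
apply/forallP/eqP => [H|->]; first by apply/permP => i; rewrite permE; exact/esym/eqP.
by move=> i; rewrite permE.
Qed.
End Sums.
End Insert.

Section Orbits.
Variable m : nat.
Implicit Types (pi : {perm 'I_m}) (k : 'I_m.+1).

Definition hC (i : 'I_m) (C : {set 'I_m}) : {set 'I_m.+1} :=
  if i \in C then ord_max |: (lift ord_max @: C) else lift ord_max @: C.

Lemma max_notin_lift (C : {set 'I_m}) : ord_max \notin lift ord_max @: C.
Proof. by apply/imsetP => [[z _ E]]; case/negP: (neq_lift ord_max z); apply/eqP. Qed.

Lemma mem_hC_lift i C z : (lift ord_max z \in hC i C) = (z \in C).
Proof.
rewrite /hC; case: ifP => _; rewrite ?in_setU1 mem_imset //; try exact: lift_inj.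
by rewrite eq_sym (negbTE (neq_lift _ _)).
Qed.

Lemma mem_hC_max i C : (ord_max \in hC i C) = (i \in C).
Proof.
rewrite /hC; case: ifP => H; first by rewrite in_setU1 eqxx.
exact/negbTE/max_notin_lift.
Qed.

Lemma hC_inj i : injective (hC i).
Proof. by move=> C D E; apply/setP => z; rewrite -!(mem_hC_lift i) E. Qed.

Lemma card_hC i C : #|hC i C| = (#|C| + (i \in C))%N.
Proof.
rewrite /hC; case: ifP => H; last by rewrite card_imset ?addn0 //; exact: lift_inj.
by rewrite cardsU1 max_notin_lift card_imset ?addn1 //; exact: lift_inj.
Qed.

Lemma porbit_sgk_lift pi i x :
  porbit (sgk pi (lift ord_max i)) (lift ord_max x) = hC i (porbit pi x).
Proof.
set sg := sgk _ _; apply/eqP; rewrite eqEsubset; apply/andP; split.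
  apply: porbit_sub; last by rewrite mem_hC_lift porbit_id.
  move=> y; case: (unliftP ord_max y) => [z ->|->].
    rewrite mem_hC_lift => zx; case: (eqVneq z i) => [E|ne].
      by rewrite /sg E sgk_k mem_hC_max -E.
    by rewrite /sg sgk_other ?mem_hC_lift ?porbit_stable // (inj_eq lift_inj).
  by rewrite mem_hC_max => ix; rewrite /sg sgk_max lp_lift mem_hC_lift porbit_stable.
apply/subsetP => y; set O := porbit sg (lift ord_max x).
have sub: porbit pi x \subset [set z | lift ord_max z \in O].
  apply: porbit_sub; last by rewrite inE porbit_id.
  move=> z; rewrite !inE /O /sg => zO; case: (eqVneq z i) => [E|ne].
    move: zO; rewrite E => zO.
    have maxO : ord_max \in porbit (sgk pi (lift ord_max i)) (lift ord_max x).
      by rewrite -{1}(sgk_k pi (lift ord_max i)); apply: porbit_stable.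
    by rewrite -lp_lift -(sgk_max pi (lift ord_max i)); apply: porbit_stable.
  by rewrite -(@sgk_other _ pi (lift ord_max i)) ?(inj_eq lift_inj) //; apply: porbit_stable.
case: (unliftP ord_max y) => [z ->|->].
  by rewrite mem_hC_lift => zx; have := subsetP sub z zx; rewrite inE.
rewrite mem_hC_max => ix; have := subsetP sub i ix; rewrite inE /O /sg => iO.
by rewrite -{1}(sgk_k pi (lift ord_max i)); apply: porbit_stable.
Qed.

Lemma porbit_sgk_max pi i :
  porbit (sgk pi (lift ord_max i)) ord_max = hC i (porbit pi i).
Proof.
have : ord_max \in porbit (sgk pi (lift ord_max i)) (lift ord_max i).
  by rewrite -{1}(sgk_k pi (lift ord_max i)) porbit_stable // porbit_id.
by rewrite -eq_porbit_mem => /eqP ->; exact: porbit_sgk_lift.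
Qed.

Lemma porbits_sgk_lift pi i :
  porbits (sgk pi (lift ord_max i)) = hC i @: porbits pi.
Proof.
apply/setP => C; apply/imsetP/imsetP => [[y _ ->]|[D /imsetP[z _ ->] ->]].
  case: (unliftP ord_max y) => [z ->|->].
    by exists (porbit pi z); rewrite ?imset_f ?porbit_sgk_lift.
  by exists (porbit pi i); rewrite ?imset_f ?porbit_sgk_max.
by exists (lift ord_max z); rewrite ?porbit_sgk_lift.
Qed.

Lemma porbit_lp_lift pi x :
  porbit (lp pi) (lift ord_max x) = lift ord_max @: porbit pi x.
Proof.
apply/eqP; rewrite eqEsubset; apply/andP; split.
  apply: porbit_sub; last by rewrite mem_imset ?porbit_id //; exact: lift_inj.
  move=> y /imsetP[z zx ->]; rewrite lp_lift mem_imset ?porbit_stable //.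
  exact: lift_inj.
apply/subsetP => y; set O := porbit (lp pi) (lift ord_max x).
have sub: porbit pi x \subset [set z | lift ord_max z \in O].
  apply: porbit_sub; last by rewrite inE porbit_id.
  by move=> z; rewrite !inE => zO; rewrite -lp_lift porbit_stable.
by move=> /imsetP[z zx ->]; have := subsetP sub z zx; rewrite inE.
Qed.

Lemma porbit_lp_max pi : porbit (lp pi) ord_max = [set ord_max].
Proof.
apply/setP => y; rewrite inE; apply/porbitP/eqP => [[j ->]|->].
  by rewrite permX_fix // lp_max.
by exists 0%N; rewrite expg0 perm1.
Qed.

Lemma porbits_lp pi : porbits (lp pi) =
  [set ord_max] |: ((fun C : {set 'I_m} => lift ord_max @: C) @: porbits pi).
Proof.
apply/setP => C; rewrite in_setU1; apply/imsetP/orP => [[y _ ->]|[/eqP ->|]].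
- case: (unliftP ord_max y) => [z ->|->]; last by left; rewrite porbit_lp_max.
  by right; apply/imsetP; exists (porbit pi z); rewrite ?imset_f ?porbit_lp_lift.
- by exists ord_max; rewrite ?porbit_lp_max.
- move=> /imsetP[D /imsetP[z _ ->] ->].
  by exists (lift ord_max z); rewrite ?porbit_lp_lift.
Qed.

End Orbits.

Lemma cl_imset (T1 T2 : finType) (A : {set {set T1}}) (h : {set T1} -> {set T2}) :
  injective h -> perm_eq [seq #|C| | C : {set T2} in h @: A] [seq #|h C| | C : {set T1} in A].
Proof.
move=> hi; rewrite /image_mem.
have -> : [seq #|h C| | C : {set T1} <- enum A] = [seq #|C| | C : {set T2} <- [seq h C | C <- enum A]].
  by rewrite -map_comp.
apply: perm_map; apply: uniq_perm; first exact: enum_uniq.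
  by rewrite map_inj_uniq ?enum_uniq.
move=> D; rewrite mem_enum; apply/imsetP/mapP => [[C CA ->]|[C]].
  by exists C; rewrite ?mem_enum.
by rewrite mem_enum => CA ->; exists C.
Qed.

Lemma cl_U1 (T1 : finType) (a : {set T1}) (A : {set {set T1}}) (f : {set T1} -> nat) :
  a \notin A -> perm_eq [seq f C | C : {set T1} in a |: A] (f a :: [seq f C | C : {set T1} in A]).
Proof.
move=> aA; rewrite /image_mem.
change (f a :: [seq f C | C <- enum A]) with [seq f C | C <- a :: enum A].
apply: perm_map; apply: uniq_perm; first exact: enum_uniq.
  by rewrite /= mem_enum aA enum_uniq.
by move=> x; rewrite mem_enum in_setU1 inE mem_enum.
Qed.

Lemma map_incr (T1 : eqType) (E : seq T1) (f : T1 -> nat) j x0 :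
  uniq E -> (j < size E)%N ->
  [seq (f D + (D == nth x0 E j))%N | D <- E] = incr_nth [seq f D | D <- E] j.
Proof.
elim: E j => [|D E IH] [|j] //= /andP[DE uE] jE.
  rewrite eqxx addn1; congr (_ :: _); apply/eq_in_map => D' D'E.
  by case: eqP => [E'|]; [rewrite -E' D'E in DE | rewrite addn0].
rewrite -IH //; congr (_ :: _).
have : nth x0 E j \in E by rewrite mem_nth.
case: eqP => [<-|_ _]; [by rewrite (negbTE DE) | by rewrite addn0].
Qed.

Lemma cl_lp m (pi : {perm 'I_m}) :
  perm_eq (cycle_lengths (lp pi)) (rcons (cycle_lengths pi) 1%N).
Proof.
rewrite /cycle_lengths porbits_lp perm_sym perm_rcons perm_sym.
apply: perm_trans (cl_U1 _ _) _.
  apply/imsetP => [[C _ E]]; have := set11 (ord_max : 'I_m.+1).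
  by rewrite E; apply/negP; exact: max_notin_lift.
rewrite cards1 perm_cons.
apply: perm_trans (cl_imset _ (imset_inj (@lift_inj _ ord_max))) _.
rewrite /image_mem; apply/seq.permP => a; rewrite !count_map; apply: eq_count => C /=.
by rewrite card_imset //; exact: lift_inj.
Qed.

Lemma cl_sgk_lift m (pi : {perm 'I_m}) i :
  perm_eq (cycle_lengths (sgk pi (lift ord_max i)))
          [seq (#|C| + (i \in C))%N | C : {set 'I_m} in porbits pi].
Proof.
rewrite /cycle_lengths porbits_sgk_lift.
apply: perm_trans (cl_imset _ (@hC_inj _ i)) _.
rewrite /image_mem; apply/seq.permP => a; rewrite !count_map; apply: eq_count => C /=.
by rewrite card_hC.
Qed.

Lemma cl_sgk_incr m (pi : {perm 'I_m}) i j :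
  (j < size (enum (porbits pi)))%N -> i \in nth set0 (enum (porbits pi)) j ->
  perm_eq (cycle_lengths (sgk pi (lift ord_max i))) (incr_nth (cycle_lengths pi) j).
Proof.
move=> jE ij; apply: perm_trans (cl_sgk_lift pi i) _.
rewrite /cycle_lengths /image_mem -(map_incr _ set0 (enum_uniq _) jE).
apply/seq.permP => a; rewrite !count_map; apply: eq_in_count => C; rewrite mem_enum => CP /=.
rewrite (porbit_eq_in CP _ ij) //.
by rewrite -mem_enum mem_nth.
Qed.

From mathcomp Require Import ring lra.

Section Real.
Variable R : realType.
Local Open Scope ring_scope.

Definition pf (s : seq nat) : R := \prod_(x <- s) ((x.-1)`!)%:R.

Lemma pf_gt0 s : 0 < pf s.
Proof. by apply: prodr_gt0 => x _; rewrite ltr0n fact_gt0. Qed.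

Lemma pf_neq0 s : pf s != 0.
Proof. by rewrite gt_eqF // pf_gt0. Qed.

Lemma pf_perm s t : perm_eq s t -> pf s = pf t.
Proof. exact: perm_big. Qed.

Lemma pf_rcons1 s : pf (rcons s 1%N) = pf s.
Proof. by rewrite /pf -cats1 big_cat big_seq1 /= fact0 mulr1. Qed.

Lemma pf_incr s j : (j < size s)%N -> (0 < nth 0%N s j)%N ->
  pf (incr_nth s j) = pf s * (nth 0%N s j)%:R.
Proof.
elim: s j => [|x s IH] [|j] //= jlt xpos.
  rewrite /pf !big_cons /=; rewrite -{1}(prednK xpos) factS natrM.
  by rewrite prednK //; ring.
by rewrite /pf !big_cons -/(pf s) -/(pf (incr_nth s j)) IH // mulrA.
Qed.

Lemma core m (pi : {perm 'I_m}) (F : seq nat -> R) :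
  (forall u v, is_comp m.+1 u -> perm_eq u v -> F u = F v) ->
  \sum_(k < m.+1) F (cycle_lengths (sgk pi k)) / pf (cycle_lengths (sgk pi k)) =
  (\sum_(j < size (cycle_lengths pi)) F (incr_nth (cycle_lengths pi) j)
    + F (rcons (cycle_lengths pi) 1%N)) / pf (cycle_lengths pi).
Proof.
move=> Fs.
set L := cycle_lengths pi; set E := enum (porbits pi).
have G k u : perm_eq (cycle_lengths (sgk pi k)) u ->
    F (cycle_lengths (sgk pi k)) / pf (cycle_lengths (sgk pi k)) = F u / pf u.
  by move=> pe; rewrite (Fs _ _ (cl_comp _) pe) (pf_perm pe).
have G' : perm_eq (cycle_lengths (sgk pi ord_max)) (rcons L 1%N).
  by rewrite sgk_lp; exact: cl_lp.
rewrite big_ord_recr /= mulrDl (G _ _ G') pf_rcons1; congr (_ + _).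
rewrite mulr_suml.
pose Hf C := F (incr_nth L (index C E)) / pf (incr_nth L (index C E)).
have H1 (i : 'I_m) : F (cycle_lengths (sgk pi (widen_ord (leqnSn m) i))) /
     pf (cycle_lengths (sgk pi (widen_ord (leqnSn m) i))) = Hf (porbit pi i).
  rewrite widen_lift; apply: G; apply: cl_sgk_incr.
    by rewrite index_mem mem_enum imset_f.
  by rewrite nth_index ?porbit_id // mem_enum imset_f.
rewrite (eq_bigr _ (fun i _ => H1 i)).
rewrite (partition_big (porbit pi) (mem (porbits pi))) /=; last first.
  by move=> i _; exact: imset_f.
have sL : size L = size E by rewrite /L /cycle_lengths /image_mem size_map.
rewrite -big_enum /= (big_nth set0) big_mkord sL.
apply: eq_bigr => j _.
have EjP : nth set0 E j \in porbits pi by rewrite -mem_enum mem_nth.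
rewrite (eq_bigr (fun _ => Hf (nth set0 E j))); last by move=> i /eqP ->.
rewrite sumr_const.
have -> : #|[pred i | porbit pi i == nth set0 E j]| = #|nth set0 E j|.
  apply: eq_card => i; case/imsetP: EjP => a _ ->; by rewrite inE eq_porbit_mem.
rewrite /Hf index_uniq ?enum_uniq //.
have Lj : nth 0%N L j = #|nth set0 E j| by rewrite /L /cycle_lengths /image_mem (nth_map set0).
have Lpos : (0 < nth 0%N L j)%N by rewrite Lj; case/imsetP: EjP => a _ ->; rewrite lt0n card_porbit_neq0.
rewrite pf_incr ?sL // -Lj -mulr_natr.
have : (nth 0%N L j)%:R != 0 :> R by rewrite pnatr_eq0 -lt0n.
have := pf_neq0 L.
move=> h1 h2; field.
by apply/andP.
Qed.

Lemma perm_rem' (x : nat) (s t : seq nat) : perm_eq s t -> perm_eq (rem x s) (rem x t).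
Proof.
move=> pe; apply/allP => y _; apply/eqP; rewrite !count_mem_rem.
by move/seq.permP: pe => ->.
Qed.

Lemma perm_swap2 (x y : nat) s : perm_eq (x :: y :: s) (y :: x :: s).
Proof. by rewrite -[x :: y :: s]/([:: x] ++ [:: y] ++ s) perm_catCA. Qed.

Lemma incr_nth_perm (s : seq nat) j : (j < size s)%N ->
  perm_eq (incr_nth s j) ((nth 0%N s j).+1 :: rem (nth 0%N s j) s).
Proof.
elim: s j => [|y s IH] [|j] //=; first by rewrite eqxx.
move=> js; have IHj := IH j js; set z := nth 0%N s j in IHj *.
case: eqP => [->|ne].
  apply: perm_trans (_ : perm_eq _ (z :: z.+1 :: rem z s)) _.
    by rewrite perm_cons.
  apply: perm_trans (perm_swap2 _ _ _) _; rewrite perm_cons perm_sym.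
  by apply: perm_to_rem; rewrite /z mem_nth.
apply: perm_trans (_ : perm_eq _ (y :: z.+1 :: rem z s)) _.
  by rewrite perm_cons.
exact: perm_swap2.
Qed.

Lemma sum_incr_perm (F : seq nat -> R) (s t : seq nat) :
  (forall u v, perm_eq u v -> F u = F v) -> perm_eq s t ->
  \sum_(j < size s) F (incr_nth s j) = \sum_(j < size t) F (incr_nth t j).
Proof.
move=> Fs pe.
have E u : \sum_(j < size u) F (incr_nth u j) = \sum_(x <- u) F (x.+1 :: rem x u).
  rewrite (big_nth 0%N) big_mkord; apply: eq_bigr => j _.
  by apply: Fs; apply: incr_nth_perm.
rewrite !E (perm_big _ pe) /=; apply: eq_bigr => x _; apply: Fs.
by rewrite perm_cons; apply: perm_rem'.
Qed.

Lemma exists_cl m s : is_comp m s -> exists pi : {perm 'I_m}, perm_eq (cycle_lengths pi) s.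
Proof.
elim: m s => [|m IH] s cs.
  by exists 1%g; rewrite (comp0 cs) (comp0 (cl_comp _)).
case/andP: cs => /allP spos /eqP ssum.
case: (boolP (1%N \in s)) => [s1|s1].
  have pe := perm_to_rem s1.
  have c' : is_comp m (rem 1%N s).
    apply/andP; split.
      by apply/allP => x /mem_rem; exact: spos.
    by apply/eqP; move: ssum; rewrite (perm_sumn pe) /=; lia.
  have [pi pepi] := IH _ c'.
  exists (lp pi); apply: perm_trans (cl_lp pi) _.
  by rewrite perm_rcons (permPr pe) perm_cons.
case: s spos ssum s1 => [|x t] spos //= ssum s1.
have x2 : (1 < x)%N.
  have := spos x (mem_head _ _); rewrite in_cons eq_sym in s1.
  by case/norP: s1 => /negbTE; case: x {ssum spos} => [|[|]].
have c' : is_comp m (x.-1 :: t).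
  apply/andP; split; last by apply/eqP; rewrite /=; lia.
  apply/allP => y; rewrite in_cons => /orP[/eqP ->|yt]; first by lia.
  by apply: spos; rewrite in_cons yt orbT.
have [pi pepi] := IH _ c'.
set L := cycle_lengths pi; set E := enum (porbits pi).
have xL : x.-1 \in L by rewrite (perm_mem pepi) mem_head.
set j := index x.-1 L.
have sL : size L = size E by rewrite /L /cycle_lengths /image_mem size_map.
have jE : (j < size E)%N by rewrite -sL index_mem.
have Lj : nth 0%N L j = #|nth set0 E j|.
  by rewrite /L /cycle_lengths /image_mem (nth_map set0).
have : (0 < #|nth set0 E j|)%N by rewrite -Lj nth_index //; lia.
case/card_gt0P => i iE.
exists (sgk pi (lift ord_max i)).
apply: perm_trans (cl_sgk_incr jE iE) _.
apply: perm_trans (incr_nth_perm _) _; first by rewrite sL.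
rewrite nth_index // prednK; last by lia.
rewrite perm_cons; apply: perm_trans (perm_rem' _ pepi) _.
by rewrite /= eqxx.
Qed.

Lemma prod_pf m (pi : {perm 'I_m}) :
  \prod_(C in porbits pi) ((#|C|.-1)`!)%:R = pf (cycle_lengths pi).
Proof. by rewrite /pf /cycle_lengths /image_mem big_map big_enum. Qed.

Definition Qphi (phi : nat -> seq nat -> R) m : {ffun {perm 'I_m} -> R} :=
  [ffun pi => phi m (cycle_lengths pi) / pf (cycle_lengths pi)].

Lemma Qphi_consistent phi : EPPF phi -> consistent (Qphi phi).
Proof.
case=> sym nonneg one rec m m0 pi.
rewrite fiber_sum ffunE.
under eq_bigr do rewrite ffunE.
rewrite core; last by move=> u v cu pe; exact: sym.
by rewrite -rec // cl_comp.
Qed.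

Lemma Qphi_law phi : EPPF phi -> forall m, (0 < m)%N -> is_law (Qphi phi m).
Proof.
move=> E; have [sym nonneg one rec] := E.
move=> m m0; split.
  by move=> s; rewrite ffunE divr_ge0 ?nonneg ?cl_comp // ltW // pf_gt0.
elim: m m0 => [//|m IH] _; case: m IH => [_|m IH].
  rewrite (big_pred1 1%g) ?ffunE; last by move=> s; rewrite /= [s]permS1 eqxx.
  by rewrite (comp1 (cl_comp _)) one /pf big_seq1 /= fact0 divr1.
rewrite total_sum -[RHS](IH isT); apply: eq_bigr => pi _.
by rewrite (Qphi_consistent E).
Qed.

Lemma Qphi_exch phi m : EPPF phi -> finitely_exchangeable (Qphi phi m).
Proof.
case=> sym _ _ _ s t /cl_perm_count pe.
by rewrite !ffunE (sym _ _ _ (cl_comp s) pe) (pf_perm pe).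
Qed.

Definition phiQ (Q : forall m : nat, {ffun {perm 'I_m} -> R}) m (s : seq nat) : R :=
  if [pick pi : {perm 'I_m} | perm_eq (cycle_lengths pi) s] is Some pi
  then Q m pi * pf s else 0.

Lemma phiQ_cl Q m (pi : {perm 'I_m}) s : finitely_exchangeable (Q m) ->
  perm_eq (cycle_lengths pi) s -> phiQ Q m s = Q m pi * pf s.
Proof.
move=> ex pe; rewrite /phiQ; case: pickP => [pi' pe'|none].
  congr (_ * _); apply: ex; apply/cl_perm_count.
  by apply: perm_trans pe' _; rewrite perm_sym.
by have := none pi; rewrite pe.
Qed.

Lemma phiQ_sym Q m s t : perm_eq s t -> phiQ Q m s = phiQ Q m t.
Proof.
move=> pe; rewrite /phiQ.
rewrite (@eq_pick _ _ (fun pi => perm_eq (cycle_lengths pi) t)); last first.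
  by move=> pi; exact: (permPr pe).
by case: pickP => // pi _; rewrite (pf_perm pe).
Qed.

Lemma phiQ_EPPF Q : (forall m, (0 < m)%N -> is_law (Q m)) ->
  (forall m, (0 < m)%N -> finitely_exchangeable (Q m)) -> consistent Q ->
  EPPF (phiQ Q).
Proof.
move=> law ex cons; split.
- by move=> n s t _; exact: phiQ_sym.
- move=> n s n0 cs; rewrite /phiQ; case: pickP => // pi _.
  by rewrite mulr_ge0 ?(law n n0).1 // ltW // pf_gt0.
- have [pi pe] := @exists_cl 1 [:: 1%N] isT.
  rewrite (phiQ_cl (ex 1%N isT) pe) /pf big_seq1 /= fact0 mulr1.
  rewrite -(law 1%N isT).2 (big_pred1 pi) // => s.
  by rewrite /= [s]permS1 [pi]permS1 eqxx.
- move=> n s n0 cs; have [pi pe] := exists_cl cs.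
  rewrite (phiQ_cl (ex n n0) pe) -(pf_perm pe) (cons n n0 pi) fiber_sum.
  have Qe (sg : {perm 'I_n.+1}) : Q n.+1 sg =
      phiQ Q n.+1 (cycle_lengths sg) / pf (cycle_lengths sg).
    by rewrite (phiQ_cl (ex n.+1 isT) (perm_refl _)) mulfK // pf_neq0.
  under eq_bigr do rewrite Qe.
  rewrite core; last by move=> u v _; exact: phiQ_sym.
  rewrite divfK ?pf_neq0 //; congr (_ + _).
    by apply: sum_incr_perm => // u v; exact: phiQ_sym.
  apply: phiQ_sym; rewrite perm_rcons perm_sym perm_rcons perm_cons perm_sym.
  exact: pe.
Qed.

End Real.

Local Open Scope ring_scope.
Unset Implicit Arguments.

Theorem theorem1 (R : realType) (n : nat) (P : {ffun {perm 'I_n} -> R}) :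
  (0 < n)%N -> is_law P ->
  (exchangeable P <->
   exists phi : nat -> seq nat -> R,
     EPPF phi /\
     forall pi : {perm 'I_n},
       P pi = phi n (cycle_lengths pi) /
              \prod_(C in porbits pi) ((#|C|.-1)`!)%:R).
Proof.
move=> n0 lawP; split.
  case=> Q [law ex cons QP].
  exists (phiQ Q); split; first exact: phiQ_EPPF.
  move=> pi; rewrite prod_pf -QP.
  by rewrite (phiQ_cl (ex n n0) (perm_refl _)) mulfK // pf_neq0.
case=> phi [E HP].
exists (Qphi phi); split.
- exact: Qphi_law.
- by move=> m _; exact: Qphi_exch.
- exact: Qphi_consistent.
- by apply/ffunP => pi; rewrite ffunE HP prod_pf.
Qed.
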